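(* Let $k$ be a field and let $M$ be the commutative monoid generated by elements $r_1,\ldots,r_{n_1},s_1,\ldots,s_{n_2}$ subject to the single relation $\sum_{i=1}^{n_1}r_i=\sum_{j=1}^{n_2}s_j$. Then any small $\mathbb{Q}$-factorialization of the affine toric variety $W=\mathrm{Spec}(k[M])$ is a log resolution.
   Context: Small $\mathbb{Q}$-factorializations of the toric variety $W$ are understood as toric ones, i.e. the toric varieties given by simplicial subdivisions of the cone of $W$ that introduce no new rays; a log resolution here means the variety is smooth (so its torus-invariant boundary is snc). *)

(* Defs.v *)
From HB Require Import structures.
From mathcomp Require Import all_boot all_order all_algebra.
Set Implicit Arguments. Unset Strict Implicit. Unset Printing Implicit Defensive.
Import Order.TTheory GRing.Theory Num.Theory.
Local Open Scope ring_scope.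

(* M = < r_1..r_n1, s_1..s_n2 | sum r_i = sum s_j >.  Its group is
   Z^(n1+n2) / Z v with v = (1,..,1,-1,..,-1); the generator r_i (resp. s_j)
   is the image of the basis vector of index lshift n2 i (resp. rshift n1 j).
   The dual lattice N is v^perp inside Z^(n1+n2), with the standard pairing. *)

Section Toric.
Variables n1 n2 : nat.
Local Notation n := (n1 + n2)%N.

Definition genM (g : 'I_n1 + 'I_n2) : 'I_n :=
  match g with inl i => lshift n2 i | inr j => rshift n1 j end.

Definition relv : 'rV[int]_n :=
  \row_k (if (k < n1)%N then 1 else -1).

Definition pairing (R : pzRingType) (u w : 'rV[R]_n) : R := \sum_k u 0 k * w 0 k.

Definition inN (u : 'rV[int]_n) : Prop := pairing u relv = 0.

Definition inNR (R : realFieldType) (u : 'rV[R]_n) : Prop :=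
  pairing u (map_mx intr relv) = 0.

(* the cone sigma of W = Spec k[M]: the dual of the cone spanned by M *)
Definition coneW (R : realFieldType) (u : 'rV[R]_n) : Prop :=
  inNR u /\ forall g : 'I_n1 + 'I_n2, 0 <= u 0 (genM g).

(* primitive generators of the rays of sigma: e_i + f_j *)
Definition rayGen (p : 'I_n1 * 'I_n2) : 'rV[int]_n :=
  \row_k ((k == lshift n2 p.1) + (k == rshift n1 p.2))%:Z.

Definition rayGenR (R : realFieldType) (p : 'I_n1 * 'I_n2) : 'rV[R]_n :=
  map_mx intr (rayGen p).

Definition inCone (R : realFieldType) (S : {set 'I_n1 * 'I_n2}) (u : 'rV[R]_n) :=
  exists c : 'I_n1 * 'I_n2 -> R,
    (forall p, 0 <= c p) /\ (forall p, p \notin S -> c p = 0) /\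
    u = \sum_p c p *: rayGenR R p.

Definition simplicialCone (R : realFieldType) (S : {set 'I_n1 * 'I_n2}) :=
  forall c : 'I_n1 * 'I_n2 -> R, (forall p, p \notin S -> c p = 0) ->
    \sum_p c p *: rayGenR R p = 0 -> forall p, c p = 0.

(* a small Q-factorialization of W: a simplicial fan subdividing sigma
   whose rays are rays of sigma (given by the list of its cones) *)
Definition smallQfactorialization (R : realFieldType)
    (F : seq {set 'I_n1 * 'I_n2}) : Prop :=
  [/\ (forall S, S \in F -> simplicialCone R S),
      (forall S T, S \in F -> T \in F -> forall u : 'rV[R]_n,
          (inCone S u /\ inCone T u) <-> inCone (S :&: T) u)
    & (forall u : 'rV[R]_n, coneW u <-> exists2 S, S \in F & inCone S u)].

Definition NBasis (d : nat) (b : 'I_d -> 'rV[int]_n) : Prop :=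
  [/\ forall k, inN (b k),
      (forall w, inN w -> exists z : 'I_d -> int, w = \sum_k z k *: b k)
    & (forall z z' : 'I_d -> int,
         \sum_k z k *: b k = \sum_k z' k *: b k -> forall k, z k = z' k)].

Definition smoothCone (S : {set 'I_n1 * 'I_n2}) : Prop :=
  exists d (b : 'I_d -> 'rV[int]_n),
    NBasis b /\ forall p, p \in S -> exists k, b k = rayGen p.

(* a toric variety given by a fan is a log resolution iff it is smooth *)
Definition smoothFan (F : seq {set 'I_n1 * 'I_n2}) : Prop :=
  forall S, S \in F -> smoothCone S.

End Toric.

(* Main.v *)
Require Import Defs.
From mathcomp Require Import all_boot all_order all_algebra.
From mathcomp Require Import ring.
Set Implicit Arguments. Unset Strict Implicit. Unset Printing Implicit Defensive.
Import Order.TTheory GRing.Theory Num.Theory.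

Section Proof.
Variables n1 n2 : nat.
Local Notation n := (n1 + n2)%N.
Local Notation vec := 'rV[int]_n.
Local Open Scope ring_scope.
Implicit Types W : {set 'I_n}.

Definition sg (k : 'I_n) : int := relv n1 n2 0 k.

Lemma sg2 k : sg k * sg k = 1.
Proof. by rewrite /sg /relv mxE; case: ifP. Qed.

Definition pr (x : vec) : int := @pairing n1 n2 _ x (relv n1 n2).

Lemma prE x : pr x = \sum_k x 0 k * sg k.
Proof. by []. Qed.

Lemma prD x y : pr (x + y) = pr x + pr y.
Proof. rewrite !prE -big_split; apply: eq_bigr => k _; by rewrite mxE mulrDl. Qed.

Lemma prZ c x : pr (c *: x) = c * pr x.
Proof. rewrite !prE mulr_sumr; apply: eq_bigr => k _; by rewrite mxE mulrA. Qed.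

Lemma prB x y : pr (x - y) = pr x - pr y.
Proof. by rewrite prD -scaleN1r prZ mulN1r. Qed.

Lemma sum_pred1 (a : 'I_n) (f : 'I_n -> int) : \sum_k (k == a)%:R * f k = f a.
Proof.
rewrite (bigD1 a) //= eqxx mul1r big1 ?addr0 // => k /negbTE ->; by rewrite mul0r.
Qed.

Lemma single_supp x u : pr x = 0 -> (forall k, k != u -> x 0 k = 0) -> x = 0.
Proof.
move=> px H.
have pu : pr x = x 0 u * sg u.
  rewrite prE (bigD1 u) //= big1 ?addr0 // => k ku; by rewrite (H k ku) mul0r.
have xu : x 0 u = 0.
  by rewrite -[x 0 u]mulr1 -(sg2 u) mulrA -pu px mul0r.
apply/rowP => k; rewrite mxE; case: (eqVneq k u) => [->|ku]; first by [].
by rewrite H.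
Qed.

Definition inNW (W : {set 'I_n}) (x : vec) :=
  pr x = 0 /\ forall k, k \notin W -> x 0 k = 0.

Definition basisW W d (b : 'I_d -> vec) :=
  [/\ forall k, inNW W (b k),
      (forall x, inNW W x -> exists z : 'I_d -> int, x = \sum_k z k *: b k)
    & (forall z : 'I_d -> int, \sum_k z k *: b k = 0 -> forall k, z k = 0)].

Definition good (W : {set 'I_n}) (x : vec) := pr x = 0 /\ exists a b, a != b /\ [/\ a \in W, b \in W,
   x 0 a * x 0 a = 1, x 0 b * x 0 b = 1 & forall k, k != a -> k != b -> x 0 k = 0].

Definition indep (S : seq vec) := forall c : vec -> int,
  \sum_(x <- S) c x *: x = 0 -> forall x, x \in S -> c x = 0.

Lemma sumcoord d (z : 'I_d -> int) (b : 'I_d -> vec) k :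
  (\sum_i z i *: b i) 0 k = \sum_i z i * b i 0 k.
Proof. rewrite summxE; apply: eq_bigr => i _; by rewrite mxE. Qed.

Lemma good_inNW W x : good W x -> inNW W x.
Proof.
case=> px [a [b [ab [aW bW _ _ H]]]]; split=> // k kW; apply: H.
  by apply: contraNneq kW => ->.
by apply: contraNneq kW => ->.
Qed.

Lemma inNW_sub (W1 W2 : {set 'I_n}) x : W1 \subset W2 -> inNW W1 x -> inNW W2 x.
Proof.
move=> /subsetP s [px H]; split=> // k kW; apply: H; apply: contra kW; exact: s.
Qed.

Lemma good_sub W v x : good W x -> x 0 v = 0 -> good (W :\ v) x.
Proof.
case=> px [a [b [ab [aW bW xa xb H]]]] xv; split=> //; exists a, b; split=> //; split=> //.
- rewrite in_setD1 aW andbT; apply/eqP => av; move: xa; by rewrite av xv mul0r.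
- rewrite in_setD1 bW andbT; apply/eqP => bv; move: xb; by rewrite bv xv mul0r.
Qed.

Lemma good_at W v x : good W x -> x 0 v != 0 -> exists u,
  u != v /\ [/\ u \in W, v \in W, x 0 v * x 0 v = 1, x 0 u * x 0 u = 1
   & forall k, k != v -> k != u -> x 0 k = 0].
Proof.
case=> px [a [b [ab [aW bW xa xb H]]]] xv.
case: (eqVneq v a) => [->|va].
  exists b; split; [by rewrite eq_sym | split=> //].
case: (eqVneq v b) => [->|vb].
  exists a; split=> //; split=> // k k1 k2; exact: H.
by rewrite H ?eqxx in xv.
Qed.

Definition extb d (b : 'I_d -> vec) (p : vec) (k : 'I_d.+1) : vec :=
  match unlift ord0 k with Some k' => b k' | None => p end.

Lemma extb0 d b p : @extb d b p ord0 = p.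
Proof. by rewrite /extb unlift_none. Qed.

Lemma extbS d b p k : @extb d b p (lift ord0 k) = b k.
Proof. by rewrite /extb liftK. Qed.

Lemma ext_basis W v d (b : 'I_d -> vec) p : v \in W -> basisW (W :\ v) b ->
  inNW W p -> p 0 v * p 0 v = 1 -> basisW W (extb b p).
Proof.
move=> vW [bN bS bI] pN pv.
have bv k : b k 0 v = 0 by rewrite (bN k).2 // setD11.
split.
- move=> k; case: (unliftP ord0 k) => [k'|] ->; rewrite ?extb0 ?extbS //.
  apply: inNW_sub (bN k'); exact: subsetDl.
- move=> x [px xW].
  set c := x 0 v * p 0 v.
  have yN : inNW (W :\ v) (x - c *: p).
    split; first by rewrite prB prZ px pN.1 mulr0 subr0.
    move=> k; rewrite in_setD1 negb_and negbK => /orP [/eqP ->|kW].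
      by rewrite !mxE /c -mulrA pv mulr1 subrr.
    by rewrite !mxE xW // pN.2 // mulr0 subr0.
  have [z Hz] := bS _ yN.
  exists (fun k => match unlift ord0 k with Some k' => z k' | None => c end).
  rewrite big_ord_recl /= unlift_none extb0.
  under eq_bigr => i _ do rewrite liftK extbS.
  by rewrite -Hz addrC subrK.
- move=> z Hz.
  rewrite big_ord_recl /= extb0 in Hz.
  have E : \sum_(i < d) z (lift ord0 i) *: extb b p (lift ord0 i) = \sum_i z (lift ord0 i) *: b i.
    by apply: eq_bigr => i _; rewrite extbS.
  rewrite E in Hz.
  have z0 : z ord0 = 0.
    have := congr1 (fun m : vec => m 0 v) Hz.
    rewrite /= mxE [X in _ + X = _]sumcoord big1 ?addr0 ?mxE; last first.
      by move=> i _; rewrite bv mulr0.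
    by move=> e; rewrite -[z ord0]mulr1 -pv mulrA e mul0r.
  rewrite z0 scale0r add0r in Hz.
  move=> k; case: (unliftP ord0 k) => [k'|] -> //.
  exact: (bI _ Hz).
Qed.

Lemma basis_only W v d (b : 'I_d -> vec) : v \in W -> (forall w, w \in W -> w = v) ->
  basisW (W :\ v) b -> basisW W b.
Proof.
move=> vW Wv [bN bS bI]; split=> //.
- move=> k; apply: inNW_sub (bN k); exact: subsetDl.
- move=> x [px xW].
  have -> : x = 0.
    apply: (single_supp (u := v)) => // k kv; apply: xW.
    by apply: contra kv => /Wv ->.
  exists (fun _ => 0); by rewrite big1 // => i _; rewrite scale0r.
Qed.

Lemma basis_empty : basisW set0 (fun k : 'I_0 => (0 : vec)).
Proof.
split; first by case.
- move=> x [px xW]; exists (fun _ => 0); rewrite big_ord0.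
  apply/rowP => k; rewrite mxE xW //; by rewrite in_set0.
- by move=> z _; case.
Qed.

Lemma sum_shift d (z : 'I_d -> int) (b : 'I_d -> vec) l a :
  \sum_i (z i + (i == l)%:R * a) *: b i = \sum_i z i *: b i + a *: b l.
Proof.
under eq_bigr => i _ do rewrite scalerDl.
rewrite big_split /=; congr (_ + _).
rewrite (bigD1 l) //= eqxx mul1r big1 ?addr0 // => i /negbTE ->.
by rewrite mul0r scale0r.
Qed.

Lemma mod_basis W d (b : 'I_d -> vec) kk l c : kk != l -> basisW W b ->
  basisW W (fun i => if i == kk then b kk + c *: b l else b i).
Proof.
move=> kl [bN bS bI].
set b' := fun i => _.
have b'E i : b' i = b i + ((i == kk)%:R * c) *: b l.
  rewrite /b'; case: (eqVneq i kk) => [->|_]; first by rewrite mul1r.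
  by rewrite mul0r scale0r addr0.
have sE (z : 'I_d -> int) : \sum_i z i *: b' i = \sum_i z i *: b i + (z kk * c) *: b l.
  under eq_bigr => i _ do rewrite b'E scalerDr scalerA.
  rewrite big_split /= -scaler_suml; congr (_ + _ *: _).
  rewrite (bigD1 kk) //= eqxx mul1r big1 ?addr0 // => i /negbTE ->.
  by rewrite mul0r mulr0.
split.
- move=> i; rewrite b'E; case: (bN i) => pi si; case: (bN l) => pl sl.
  split; first by rewrite prD prZ pi pl mulr0 addr0.
  by move=> k kW; rewrite !mxE si // sl // mulr0 addr0.
- move=> x /bS [z ->].
  exists (fun i => z i + (i == l)%:R * (- (z kk * c))).
  rewrite sE sum_shift (negbTE kl) mul0r addr0.
  by rewrite scaleNr addrNK.
- move=> z; rewrite sE -sum_shift => /bI H k.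
  have zk : z kk = 0 by have := H kk; rewrite (negbTE kl) mul0r addr0.
  by have := H k; rewrite zk mul0r mulr0 addr0.
Qed.

Lemma sum_seq1 (S : seq vec) a t : uniq S -> a \in S ->
  \sum_(y <- S) ((y == a)%:R * t) *: y = t *: a.
Proof.
move=> uS aS; rewrite (big_rem a) //= eqxx mul1r big1_seq ?addr0 // => y /andP [_].
rewrite (mem_rem_uniq _ uS) inE => /andP [/negbTE -> _].
by rewrite mul0r scale0r.
Qed.

Lemma indep_rem S p : uniq S -> indep S -> p \in S -> indep (rem p S).
Proof.
move=> uS iS pS c H x xR.
pose c' y := if y == p then 0 else c y.
have H' : \sum_(y <- S) c' y *: y = 0.
  rewrite (big_rem p) //= /c' eqxx scale0r add0r -[RHS]H.
  apply: eq_big_seq => y; rewrite (mem_rem_uniq _ uS) inE => /andP [/negbTE -> _] //.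
have := iS c' H' x (mem_rem xR).
by rewrite /c'; move: xR; rewrite (mem_rem_uniq _ uS) inE => /andP [/negbTE -> _].
Qed.

Definition goalW W (S : seq vec) := exists d (b : 'I_d -> vec),
  basisW W b /\ forall x, x \in S -> exists k, b k = x.

Definition hypW W := forall S, uniq S -> indep S ->
  (forall x, x \in S -> good W x) -> goalW W S.

Lemma caseA W v : v \in W -> hypW (W :\ v) -> forall S, uniq S -> indep S ->
  (forall x, x \in S -> good W x) -> (forall x, x \in S -> x 0 v = 0) -> goalW W S.
Proof.
move=> vW IH S uS iS gS zS.
have [d [b [bB bS]]] := IH S uS iS (fun x xS => good_sub (gS x xS) (zS x xS)).
case: (boolP [exists w in W, w != v]) => [/exists_inP [w wW wv] | /exists_inP nw].
- pose p : vec := \row_k ((k == v)%:R - (k == w)%:R * (sg v * sg w)).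
  have pv : p 0 v = 1 by rewrite mxE eqxx eq_sym (negbTE wv) mul0r subr0.
  have pN : inNW W p.
    split.
      rewrite prE; under eq_bigr => k _ do rewrite mxE mulrBl -mulrA.
      by rewrite sumrB !sum_pred1 -mulrA sg2 mulr1 subrr.
    move=> k kW; rewrite mxE.
    have -> : (k == v) = false by apply/negbTE; apply: contraNneq kW => ->.
    have -> : (k == w) = false by apply/negbTE; apply: contraNneq kW => ->.
    by rewrite mul0r subrr.
  exists d.+1, (extb b p); split.
    by apply: ext_basis vW bB pN _; rewrite pv mulr1.
  move=> x xS; have [k bk] := bS x xS; exists (lift ord0 k); by rewrite extbS.
- exists d, b; split=> //.
  apply: basis_only vW _ bB => w wW; case: (eqVneq w v) => // ne.
  by exfalso; apply: nw; exists w.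
Qed.

Lemma caseB1 W v : v \in W -> hypW (W :\ v) -> forall S p, uniq S -> indep S ->
  (forall x, x \in S -> good W x) -> p \in S -> p 0 v != 0 ->
  (forall x, x \in S -> x != p -> x 0 v = 0) -> goalW W S.
Proof.
move=> vW IH S p uS iS gS pS pv zS.
have memR x : (x \in rem p S) = (x != p) && (x \in S).
  by rewrite (mem_rem_uniq _ uS) inE.
have [d [b [bB bS]]] : goalW (W :\ v) (rem p S).
  apply: IH; first exact: rem_uniq.
    exact: indep_rem.
  move=> x; rewrite memR => /andP [xp xS]; apply: good_sub (gS x xS) _.
  exact: zS.
have [u [_ [_ _ pv2 _ _]]] := good_at (gS p pS) pv.
exists d.+1, (extb b p); split.
  exact: ext_basis vW bB (good_inNW (gS p pS)) pv2.
move=> x xS; case: (eqVneq x p) => [->|xp].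
  by exists ord0; rewrite extb0.
have [k bk] := bS x (rem_mem xp xS); exists (lift ord0 k); by rewrite extbS.
Qed.

Lemma caseB2 W v S p g : uniq S -> indep S -> (forall x, x \in S -> good W x) ->
  p \in S -> g \in S -> g != p -> p 0 v != 0 -> g 0 v != 0 ->
  let q := g - (g 0 v * p 0 v) *: p in
  (uniq (q :: rem g S) -> indep (q :: rem g S) ->
     (forall x, x \in q :: rem g S -> good W x) -> goalW W (q :: rem g S)) ->
  goalW W S.
Proof.
move=> uS iS gS pS gS' gp pv gv q IH.
have memR x : (x \in rem g S) = (x != g) && (x \in S).
  by rewrite (mem_rem_uniq _ uS) inE.
have [w [wv [wW vW pv2 pw2 pz]]] := good_at (gS p pS) pv.
have [u [uv [uW _ gv2 gu2 gz]]] := good_at (gS g gS') gv.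
have pN := (gS p pS).1; have gN := (gS g gS').1.
have uw : u != w.
  apply/eqP => uw; subst u.
  have h0 : g 0 v *: p - p 0 v *: g = 0.
    apply: (single_supp (u := w)); first by rewrite prB !prZ pN gN !mulr0 subrr.
    move=> k kw; rewrite !mxE; case: (eqVneq k v) => [->|kv].
      by rewrite mulrC subrr.
    by rewrite (pz k kv kw) (gz k kv kw) !mulr0 subrr.
  have := iS (fun y => (y == p)%:R * g 0 v + (y == g)%:R * - p 0 v).
  under eq_bigr => y _ do rewrite scalerDl.
  rewrite big_split /= !sum_seq1 // scaleNr => /(_ h0 g gS').
  rewrite eqxx (negbTE gp) mul0r add0r mul1r => /eqP.
  by rewrite oppr_eq0 (negbTE pv).
have qv : q 0 v = 0 by rewrite !mxE -mulrA pv2 mulr1 subrr.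
have gq : good W q.
  split; first by rewrite prB prZ pN gN mulr0 subrr.
  exists u, w; split=> //; split=> //.
  - by rewrite !mxE (pz u uv uw) mulr0 subr0.
  - rewrite !mxE (gz w wv); last by rewrite eq_sym.
    rewrite sub0r mulrNN mulrACA [_ * (g 0 v * _)]mulrACA gv2 pv2 pw2 !mulr1 //.
  - move=> k ku kw; case: (eqVneq k v) => [->|kv] //.
    by rewrite !mxE (pz k kv kw) (gz k kv ku) mulr0 subr0.
have qR : q \notin rem g S.
  apply/negP => qR; move: (qR); rewrite memR => /andP [qg qS].
  have := iS (fun y => (y == g)%:R * 1 + (y == q)%:R * (-1)
                      + (y == p)%:R * (- (g 0 v * p 0 v))).
  under eq_bigr => y _ do rewrite !scalerDl.
  rewrite !big_split /= !sum_seq1 //.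
  have E : 1 *: g + (-1) *: q + (- (g 0 v * p 0 v)) *: p = 0.
    by apply/rowP => k; rewrite !mxE; ring.
  move=> /(_ E g gS'); rewrite eqxx eq_sym (negbTE qg) (negbTE gp).
  by rewrite mul1r !mul0r !addr0.
have pR : p \in rem g S by rewrite memR eq_sym gp pS.
have uq : uniq (q :: rem g S) by rewrite /= qR rem_uniq.
have iq : indep (q :: rem g S).
  move=> c; rewrite big_cons => H.
  pose t := c q * (g 0 v * p 0 v).
  pose c' y := if y == g then c q else c y - (y == p)%:R * t.
  have H' : \sum_(y <- S) c' y *: y = 0.
    rewrite (big_rem g gS') /= /c' eqxx.
    have -> : \sum_(y <- rem g S) (if y == g then c q else c y - (y == p)%:R * t) *: y
            = \sum_(y <- rem g S) c y *: y - t *: p.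
      rewrite -(sum_seq1 t (rem_uniq g uS) pR) -sumrB.
      apply: eq_big_seq => y; rewrite memR => /andP [/negbTE -> _].
      by rewrite scalerBl.
    have E : c q *: q = c q *: g - t *: p by rewrite /q scalerBr scalerA.
    rewrite E in H; rewrite -[RHS]H.
    by rewrite addrA [c q *: g - t *: p + _]addrAC.
  have cq : c q = 0 by have := iS c' H' g gS'; rewrite /c' eqxx.
  move=> x; rewrite inE => /orP [/eqP -> // | xR].
  have := iS c' H' x (mem_rem xR); rewrite /c'.
  move: xR; rewrite memR => /andP [/negbTE -> _].
  by rewrite /t cq mul0r mulr0 subr0.
have gq' : forall x, x \in q :: rem g S -> good W x.
  move=> x; rewrite inE => /orP [/eqP -> // | xR]; exact: gS (mem_rem xR).
have [d [b [bB bS]]] := IH uq iq gq'.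
have [kk bk] := bS q (mem_head _ _).
have [l bl] := bS p (ltac:(by rewrite inE pR orbT)).
have kl : kk != l.
  apply/eqP => e; move: bk; rewrite e bl => pq.
  by move: pv; rewrite pq qv eqxx.
exists d, (fun i => if i == kk then b kk + (g 0 v * p 0 v) *: b l else b i).
split; first exact: mod_basis.
move=> x xS; case: (eqVneq x g) => [->|xg].
  by exists kk; rewrite eqxx bk bl /q subrK.
have xR : x \in rem g S by rewrite memR xg.
have [i bi] := bS x (ltac:(by rewrite inE xR orbT)).
exists i; case: (eqVneq i kk) => [e|ik] //.
by move: qR; rewrite -bk -e bi xR.
Qed.

Definition touch v (S : seq vec) := count (fun x : vec => x 0 v != 0) S.

Lemma main_step W v : v \in W -> hypW (W :\ v) -> forall k S,
  (touch v S <= k)%N -> uniq S -> indep S ->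
  (forall x, x \in S -> good W x) -> goalW W S.
Proof.
move=> vW IH; elim=> [|k IHk] S; rewrite /touch => cS uS iS gS.
  apply: (caseA vW IH uS iS gS) => x xS; apply/eqP; apply: contraTT cS => nz.
  by rewrite -ltnNge -has_count; apply/hasP; exists x.
case: (boolP (has (fun x : vec => x 0 v != 0) S)) => [/hasP [p pS pv] | /hasPn zS]; last first.
  apply: (caseA vW IH uS iS gS) => x xS; apply/eqP; apply/negbNE; exact: zS.
case: (boolP (has (fun x : vec => (x != p) && (x 0 v != 0)) S))
  => [/hasP [g gS' /andP [gp gv]] | /hasPn H]; last first.
  apply: (caseB1 vW IH uS iS gS pS pv) => x xS xp.
  by move: (H x xS); rewrite xp /= negbK => /eqP.
apply: (caseB2 uS iS gS pS gS' gp pv gv) => /= uq iq gq; apply: IHk => //.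
have [w [_ [_ _ pv2 _ _]]] := good_at (gS p pS) pv.
have qv : (g - (g 0 v * p 0 v) *: p) 0 v = 0 by rewrite !mxE -mulrA pv2 mulr1 subrr.
move: cS; rewrite (permP (perm_to_rem gS')) /= gv qv eqxx /=.
by rewrite add1n add0n ltnS.
Qed.

Lemma base_goal W S : W = set0 -> (forall x, x \in S -> good W x) -> goalW W S.
Proof.
move=> W0 gS; exists 0%N, (fun _ => 0); split; first by rewrite W0; exact: basis_empty.
move=> x xS; have [_ [a [b [_ [aW _]]]]] := gS x xS.
by rewrite W0 in_set0 in aW.
Qed.

Lemma main m : forall W, (#|W| <= m)%N -> hypW W.
Proof.
elim: m => [|m IHm] W cW S uS iS gS.
  apply: base_goal gS; apply/eqP; by rewrite -cards_eq0 -leqn0.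
case: (set_0Vmem W) => [W0 | [v vW]]; first exact: base_goal gS.
apply: (main_step vW _ (leqnn _)) => //.
apply: IHm; rewrite -ltnS; apply: leq_trans cW.
by rewrite (cardsD1 v W) vW.
Qed.

Lemma rgE (p : 'I_n1 * 'I_n2) k :
  rayGen p 0 k = ((k == lshift n2 p.1)%:R + (k == rshift n1 p.2)%:R : int).
Proof. by rewrite mxE; case: (k == lshift n2 p.1); case: (k == rshift n1 p.2). Qed.

Lemma lr_neq (i : 'I_n1) (j : 'I_n2) : lshift n2 i != rshift n1 j.
Proof.
apply/eqP => /(congr1 val) /= e; have := ltn_ord i; rewrite e.
by rewrite ltnNge leq_addr.
Qed.

Lemma rg_good p : good setT (rayGen p).
Proof.
have ab := lr_neq p.1 p.2.
split.
  rewrite prE; under eq_bigr => k _ do rewrite rgE mulrDl.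
  rewrite big_split /= !sum_pred1 /sg /relv !mxE /= ltn_ord ltnNge leq_addr /=.
  by rewrite subrr.
exists (lshift n2 p.1), (rshift n1 p.2); split=> //; split; rewrite ?in_setT //.
- by rewrite rgE eqxx (negbTE ab).
- by rewrite rgE eqxx eq_sym (negbTE ab).
- by move=> k /negbTE k1 /negbTE k2; rewrite rgE k1 k2.
Qed.

Lemma rg_inj : injective (@rayGen n1 n2).
Proof.
move=> [i j] [i' j'] e.
have h1 := congr1 (fun x : vec => x 0 (lshift n2 i)) e.
have h2 := congr1 (fun x : vec => x 0 (rshift n1 j)) e.
rewrite /= !rgE /= eqxx (negbTE (lr_neq i j)) (negbTE (lr_neq i j')) in h1.
rewrite /= !rgE /= eqxx eq_sym (negbTE (lr_neq i j)) eq_sym (negbTE (lr_neq i' j)) in h2.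
have ei : i = i'.
  move: h1; case: eqP => [/lshift_inj // | _]; by rewrite !addr0.
have ej : j = j'.
  move: h2; case: eqP => [/rshift_inj // | _]; by rewrite !add0r.
by rewrite ei ej.
Qed.

Lemma smooth_of_indep (R : realFieldType) (S : {set 'I_n1 * 'I_n2}) :
  simplicialCone R S -> smoothCone S.
Proof.
move=> HS.
pose L := [seq rayGen p | p <- enum S].
have uL : uniq L by rewrite map_inj_uniq ?enum_uniq //; exact: rg_inj.
have gL : forall x, x \in L -> good setT x.
  by move=> x /mapP [p _ ->]; exact: rg_good.
have iL : indep L.
  move=> c H x /mapP [p pS ->]; rewrite mem_enum in pS.
  rewrite big_map big_enum /= in H.
  pose c' (p : 'I_n1 * 'I_n2) : R := if p \in S then (c (rayGen p))%:~R else 0.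
  suff Z : forall p, c' p = 0.
    by have := Z p; rewrite /c' pS => /eqP; rewrite intr_eq0 => /eqP.
  apply: HS; first by move=> p' /negbTE; rewrite /c' => ->.
  apply/rowP => k; rewrite summxE mxE.
  have Hk := congr1 (fun m : vec => m 0 k) H.
  rewrite /= summxE mxE in Hk.
  under eq_bigr => p' _ do rewrite !mxE (fun_if (fun t => t * _)) mul0r.
  rewrite -big_mkcond /=.
  under eq_bigr => p' _ do rewrite -intrM.
  rewrite -rmorph_sum.
  rewrite (_ : \sum_(i in S) _ = 0) ?rmorph0 //.
  by rewrite -[RHS]Hk; apply: eq_bigr => i _; rewrite !mxE.
have MM : goalW [set: 'I_n] L.
  exact: (@main #|[set: 'I_n]| [set: 'I_n] (leqnn _) L uL iL gL).
have [d [b [[bN bS bI] bL]]] := MM.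
exists d, b; split.
  split.
  - by move=> k; exact: (bN k).1.
  - by move=> w wN; apply: bS; split=> // k; rewrite in_setT.
  - move=> z z' E k; apply/eqP; rewrite -subr_eq0; apply/eqP; apply: (bI (fun i => z i - z' i)).
    under eq_bigr => i _ do rewrite scalerBl.
    by rewrite sumrB E subrr.
move=> p pS; apply: bL; apply: map_f; by rewrite mem_enum.
Qed.

End Proof.

Unset Implicit Arguments.

Theorem mainTheorem11 (R : realFieldType) (n1 n2 : nat)
    (F : seq {set 'I_n1 * 'I_n2}) :
  smallQfactorialization R F -> smoothFan F.
Proof.
move=> [HS _ _] S SF; exact: (smooth_of_indep (HS S SF)).
Qed.
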